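(* Fix $h_{pd},h_{ps},h_{sd}\in(0,1]$, $\lambda_p,\lambda_s\in(0,1)$, $\psi>0$ and $\mu_p\in[h_{pd},h_{pd}+(1-h_{pd})h_{ps}]$ with $\mu_p>\lambda_p$. Let P2 be: maximize $b\,h_{sd}(1-\lambda_p/\mu_p)$ over $b\in[0,1]$ subject to $\phi_\psi(b)\le 0$; and P4 be: minimize $N_s(b)/\lambda_s$ over $b\in[0,1]$ subject to $\phi_\psi(b)\le 0$ and $b\,h_{sd}(\mu_p-\lambda_p)>\lambda_s\mu_p$. Suppose P2 has an optimal solution $b^*(\mu_p)$ with $b^*(\mu_p)\,h_{sd}(\mu_p-\lambda_p)>\lambda_s\mu_p$. Then $b^*(\mu_p)$ is the (unique) optimal solution of P4; i.e., for fixed $\mu_p$, maximizing the SU throughput and minimizing the average SU packet delay under the PU delay constraint yield the same optimal $b$.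
   Context: Model: PU queue $Q_p$, SU queues $Q_s$, $Q_{sp}$; $h_{pd},h_{sd},h_{ps}$ link success probabilities; $\lambda_p,\lambda_s$ arrival rates; $b\in[0,1]$ the probability the SU serves $Q_s$ when the PU is idle; $\mu_p=h_{pd}+(1-h_{pd})h_{ps}a$ the PU service rate, $a\in[0,1]$. Write $\bar b=1-b$, $\bar\mu_p=1-\mu_p$, $N_p=\frac{\lambda_p-\lambda_p^2}{\mu_p-\lambda_p}$, $$\phi_\psi(b)=\lambda_p(\mu_p-h_{pd})\big(\bar b h_{sd}\bar\mu_p\lambda_p-(\mu_p-h_{pd})\mu_p\lambda_p-h_{pd}\lambda_p+\mu_p^2\big)-\mu_p(\mu_p-\lambda_p)\big(\bar b h_{sd}(\mu_p-\lambda_p)-\lambda_p(\mu_p-h_{pd})\big)(\lambda_p\psi-N_p),$$ $$N_s(b)=\frac{b\,h_{sd}\lambda_p\lambda_s(1-\mu_p)+(\lambda_s-\lambda_s^2)(\mu_p-\lambda_p)\mu_p}{(\mu_p-\lambda_p)\big(b\,h_{sd}(\mu_p-\lambda_p)-\lambda_s\mu_p\big)}.$$ *)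

(* Defs.v *)
From Stdlib Require Import Reals Lra.
Open Scope R_scope.

Definition Np (lp mup : R) : R := (lp - lp ^ 2) / (mup - lp).

(* phi_psi(b), with bbar = 1 - b, mubar = 1 - mu_p *)
Definition phi (hpd hsd lp mup psi b : R) : R :=
  lp * (mup - hpd) *
    ((1 - b) * hsd * (1 - mup) * lp - (mup - hpd) * mup * lp - hpd * lp + mup ^ 2)
  - mup * (mup - lp) *
    ((1 - b) * hsd * (mup - lp) - lp * (mup - hpd)) * (lp * psi - Np lp mup).

Definition Ns (hsd lp ls mup b : R) : R :=
  (b * hsd * lp * ls * (1 - mup) + (ls - ls ^ 2) * (mup - lp) * mup) /
  ((mup - lp) * (b * hsd * (mup - lp) - ls * mup)).

Definition P2_feasible (hpd hsd lp mup psi b : R) : Prop :=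
  0 <= b <= 1 /\ phi hpd hsd lp mup psi b <= 0.
Definition P2_obj (hsd lp mup b : R) : R := b * hsd * (1 - lp / mup).
Definition P2_optimal (hpd hsd lp mup psi b : R) : Prop :=
  P2_feasible hpd hsd lp mup psi b /\
  forall b', P2_feasible hpd hsd lp mup psi b' ->
    P2_obj hsd lp mup b' <= P2_obj hsd lp mup b.

Definition P4_feasible (hpd hsd lp ls mup psi b : R) : Prop :=
  0 <= b <= 1 /\ phi hpd hsd lp mup psi b <= 0 /\
  b * hsd * (mup - lp) > ls * mup.
Definition P4_obj (hsd lp ls mup b : R) : R := Ns hsd lp ls mup b / ls.
Definition P4_optimal (hpd hsd lp ls mup psi b : R) : Prop :=
  P4_feasible hpd hsd lp ls mup psi b /\
  forall b', P4_feasible hpd hsd lp ls mup psi b' ->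
    P4_obj hsd lp ls mup b <= P4_obj hsd lp ls mup b'.

(* Main.v *)
Require Import Defs.
From Stdlib Require Import Reals Lra.
Open Scope R_scope.

Lemma Ns_diff (hsd lp ls mup b1 b2 : R) :
  mup - lp <> 0 ->
  b1 * hsd * (mup - lp) - ls * mup <> 0 ->
  b2 * hsd * (mup - lp) - ls * mup <> 0 ->
  Ns hsd lp ls mup b1 - Ns hsd lp ls mup b2 =
  (b2 - b1) * (hsd * lp * ls * (1 - mup) * (ls * mup)
     + (ls - ls ^ 2) * (mup - lp) * mup * (hsd * (mup - lp))) /
  ((mup - lp) * (b1 * hsd * (mup - lp) - ls * mup)
              * (b2 * hsd * (mup - lp) - ls * mup)).
Proof. intros. unfold Ns. field. auto. Qed.

Lemma Ns_mono (hsd lp ls mup b1 b2 : R) :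
  0 < hsd -> 0 < lp -> 0 < ls < 1 -> lp < mup -> mup <= 1 ->
  b1 * hsd * (mup - lp) > ls * mup ->
  b2 * hsd * (mup - lp) > ls * mup ->
  b1 < b2 -> Ns hsd lp ls mup b2 < Ns hsd lp ls mup b1.
Proof.
  intros. apply Rminus_gt_0_lt.
  rewrite Ns_diff by lra.
  unfold Rdiv. apply Rmult_lt_0_compat.
  - apply Rmult_lt_0_compat; [lra|].
    apply Rplus_le_lt_0_compat.
    + assert (0 <= 1 - mup) by lra.
      assert (0 < ls*mup) by (apply Rmult_lt_0_compat; lra).
      repeat apply Rmult_le_pos; lra.
    + assert (0 < ls - ls^2) by nra.
      repeat apply Rmult_lt_0_compat; lra.
  - apply Rinv_0_lt_compat. repeat apply Rmult_lt_0_compat; lra.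
Qed.

Theorem lemma2 (hpd hps hsd lp ls psi mup bstar : R) :
  0 < hpd <= 1 -> 0 < hps <= 1 -> 0 < hsd <= 1 ->
  0 < lp < 1 -> 0 < ls < 1 -> 0 < psi ->
  hpd <= mup <= hpd + (1 - hpd) * hps -> mup > lp ->
  P2_optimal hpd hsd lp mup psi bstar ->
  bstar * hsd * (mup - lp) > ls * mup ->
  P4_optimal hpd hsd lp ls mup psi bstar /\
  (forall b, P4_optimal hpd hsd lp ls mup psi b -> b = bstar).
Proof.
  intros Hpd Hps Hsd Hlp Hls Hpsi Hmu Hml [[Hb Hphi] Hopt] Hstar.
  assert (Hm1 : mup <= 1) by nra.
  assert (Hc : 0 < hsd * (1 - lp / mup)).
  { apply Rmult_lt_0_compat; [lra|].
    assert (lp / mup < 1). { apply (Rmult_lt_reg_r mup); [lra|].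
      unfold Rdiv; rewrite Rmult_assoc, Rinv_l by lra; lra. } lra. }
  assert (Hle : forall b', P2_feasible hpd hsd lp mup psi b' -> b' <= bstar).
  { intros b' Hf. specialize (Hopt b' Hf). unfold P2_obj in Hopt.
    rewrite !Rmult_assoc in Hopt.
    apply (Rmult_le_reg_r (hsd * (1 - lp / mup))); auto. }
  assert (Hobj : forall b1 b2, P4_feasible hpd hsd lp ls mup psi b1 ->
            P4_feasible hpd hsd lp ls mup psi b2 -> b1 < b2 ->
            P4_obj hsd lp ls mup b2 < P4_obj hsd lp ls mup b1).
  { intros b1 b2 [_ [_ H1]] [_ [_ H2]] H12. unfold P4_obj, Rdiv.
    apply Rmult_lt_compat_r. apply Rinv_0_lt_compat; lra.
    apply Ns_mono; lra. }
  assert (Hf4 : P4_feasible hpd hsd lp ls mup psi bstar) by (repeat split; lra).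
  split.
  - split; auto. intros b' Hf'.
    assert (b' <= bstar) by (apply Hle; destruct Hf' as [? [? ?]]; split; auto).
    destruct (Req_dec b' bstar) as [->|Hn]; [lra|].
    left. apply Hobj; auto; lra.
  - intros b [Hfb Hob].
    assert (b <= bstar) by (apply Hle; destruct Hfb as [? [? ?]]; split; auto).
    destruct (Req_dec b bstar) as [|Hn]; auto.
    specialize (Hob bstar Hf4).
    assert (P4_obj hsd lp ls mup bstar < P4_obj hsd lp ls mup b) by (apply Hobj; auto; lra).
    lra.
Qed.
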